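(* Let $(X_n)_{n\ge1}$ and $(Y_n)_{n\ge1}$ be two sequences of random variables on a common probability space such that $0\le X_n\le\kappa Y_n$ for some positive constant $\kappa$ (with $0<\mathbb{E}(Y_n)<\infty$). If $Y_n/\mathbb{E}(Y_n)\to1$ in probability, then $$\frac{\mathbb{E}(X_n)}{\mathbb{E}(Y_n)}\to0\iff\frac{X_n}{Y_n}\to0\text{ in probability}.$$ If, in addition, $\mathbb{E}(X_n)\ge\tau\mathbb{E}(Y_n)$ for some $\tau>0$ and $Y_n/\mathbb{E}(Y_n)\to1$ in quadratic mean, then $$\frac{X_n}{\mathbb{E}(X_n)}\to1\text{ in probability}\implies\frac{\mathrm{Var}(X_n)}{[\mathbb{E}(X_n)]^2}\to0.$$ *)

(* Defs.v *)
From HB Require Import structures.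
From mathcomp Require Import all_boot all_order all_algebra.
From mathcomp Require Import all_classical all_reals all_analysis.
Set Implicit Arguments. Unset Strict Implicit. Unset Printing Implicit Defensive.
Import Order.TTheory GRing.Theory Num.Theory.
Import numFieldNormedType.Exports.
Local Open Scope classical_set_scope.
Local Open Scope ring_scope.

Definition cvg_in_prob {d} {T : measurableType d} {R : realType}
  (P : probability T R) (Z : nat -> T -> R) (c : R) : Prop :=
  forall eps : R, 0 < eps ->
    (fun n => P [set w | eps <= `|Z n w - c|]) @ \oo --> 0%E.

Definition cvg_in_qm {d} {T : measurableType d} {R : realType}
  (P : probability T R) (Z : nat -> T -> R) (c : R) : Prop :=
  (fun n => ('E_P[fun w => ((Z n w - c) ^+ 2)%R])%E) @ \oo --> 0%E.

(* Main.v *)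
From HB Require Import structures.
From mathcomp Require Import all_boot all_order all_algebra.
From mathcomp Require Import all_classical all_reals all_analysis.
From mathcomp Require Import ring lra.
From mathcomp Require Import measurable_realfun.
Require Import Defs.
Set Implicit Arguments. Unset Strict Implicit.
Import Order.TTheory GRing.Theory Num.Theory.
Import numFieldNormedType.Exports.
Local Open Scope classical_set_scope.
Local Open Scope ring_scope.

Section helpers.
Context d (T : measurableType d) (R : realType) (P : probability T R).

Lemma intcst (a : R) : (\int[P]_x (a%:E) = a%:E)%E.
Proof. by have := expectation_cst P a; rewrite unlock. Qed.

Lemma intD (u v : T -> R) : measurable_fun setT u -> measurable_fun setT v ->
  (forall x, 0 <= u x) -> (forall x, 0 <= v x) ->
  (\int[P]_x ((u x + v x)%:E) = \int[P]_x ((u x)%:E) + \int[P]_x ((v x)%:E))%E.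
Proof.
move=> mu mv u0 v0; under eq_integral do rewrite EFinD.
apply: ge0_integralD => //.
- by move=> x _; rewrite lee_fin.
- exact/measurable_EFinP.
- by move=> x _; rewrite lee_fin.
- exact/measurable_EFinP.
Qed.

Lemma intZ (u : T -> R) (b : R) : 0 <= b -> measurable_fun setT u ->
  (forall x, 0 <= u x) ->
  (\int[P]_x ((b * u x)%:E) = b%:E * \int[P]_x ((u x)%:E))%E.
Proof.
move=> b0 mu u0; under eq_integral do rewrite EFinM.
apply: ge0_integralZl => //.
- exact/measurable_EFinP.
- by move=> x _; rewrite lee_fin.
Qed.

Lemma E_scale (f : T -> R) (c : R) : 0 <= c -> measurable_fun setT f ->
  (forall x, 0 <= f x) -> ('E_P[fun w => (f w * c)%R] = 'E_P[f] * c%:E)%E.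
Proof.
move=> c0 mf f0; rewrite !unlock.
under eq_integral do rewrite mulrC.
by rewrite intZ // muleC.
Qed.

Lemma E_indic (A : set T) : measurable A -> ('E_P[\1_A] = P A)%E.
Proof. by move=> mA; rewrite unlock integral_indic // setIT. Qed.

Lemma E_ge0 (f : T -> R) : (forall x, 0 <= f x) -> (0 <= 'E_P[f])%E.
Proof. by move=> f0; rewrite unlock; apply: integral_ge0 => x _; rewrite lee_fin. Qed.

Lemma E_le (f g1 g2 g3 : T -> R) (c a b1 b2 b3 r1 r2 r3 : R) :
  measurable_fun setT f -> measurable_fun setT g1 ->
  measurable_fun setT g2 -> measurable_fun setT g3 ->
  (forall x, 0 <= f x) -> (forall x, 0 <= g1 x) ->
  (forall x, 0 <= g2 x) -> (forall x, 0 <= g3 x) ->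
  0 <= c -> 0 <= a -> 0 <= b1 -> 0 <= b2 -> 0 <= b3 ->
  ('E_P[g1] <= r1%:E)%E -> ('E_P[g2] <= r2%:E)%E -> ('E_P[g3] <= r3%:E)%E ->
  (forall x, f x + c <= a + b1 * g1 x + b2 * g2 x + b3 * g3 x) ->
  ('E_P[f] <= (a + b1 * r1 + b2 * r2 + b3 * r3 - c)%:E)%E.
Proof.
move=> mf m1 m2 m3 f0 p1 p2 p3 c0 a0 b10 b20 b30 E1 E2 E3 H.
have mc (k : R) : measurable_fun setT (fun _ : T => k) by exact: measurable_cst.
have mZ (b : R) (g : T -> R) : measurable_fun setT g -> measurable_fun setT (fun x => b * g x).
  by move=> mg; exact: (measurable_funM (measurable_cst b) mg).
have madd (g h : T -> R) : measurable_fun setT g -> measurable_fun setT h ->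
   measurable_fun setT (fun x => g x + h x).
  by move=> mg mh; exact: (measurable_funD mg mh).
have key : (\int[P]_x ((f x + c)%:E) <=
   \int[P]_x ((a + b1 * g1 x + b2 * g2 x + b3 * g3 x)%:E))%E.
  apply: ge0_le_integral => //.
  - by move=> x _; rewrite lee_fin addr_ge0.
  - by apply/measurable_EFinP; apply: (madd).
  - apply/measurable_EFinP; apply: (madd); [apply: (madd); [apply: (madd)|]|];
    by [apply: (mZ) | ].
  - by move=> x _; rewrite lee_fin.
rewrite (@intD _ _ mf (mc c) f0 (fun=> c0)) intcst in key.
have q1 x : 0 <= a + b1 * g1 x by rewrite addr_ge0 ?mulr_ge0.
have q2 x : 0 <= a + b1 * g1 x + b2 * g2 x by rewrite addr_ge0 ?mulr_ge0.
rewrite (@intD _ _ (madd _ _ (madd _ _ (mc a) (mZ b1 _ m1)) (mZ b2 _ m2)) (mZ b3 _ m3) q2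
  (fun x => mulr_ge0 b30 (p3 x))) in key.
rewrite (@intD _ _ (madd _ _ (mc a) (mZ b1 _ m1)) (mZ b2 _ m2) q1
  (fun x => mulr_ge0 b20 (p2 x))) in key.
rewrite (@intD _ _ (mc a) (mZ b1 _ m1) (fun=> a0)
  (fun x => mulr_ge0 b10 (p1 x))) in key.
rewrite intcst (@intZ _ _ b10 m1 p1) (@intZ _ _ b20 m2 p2) (@intZ _ _ b30 m3 p3) in key.
rewrite unlock in E1 E2 E3 *.
have I0 (g : T -> R) : (forall x, 0 <= g x) -> (0 <= \int[P]_w (g w)%:E)%E.
  by move=> g0; apply: integral_ge0 => x _; rewrite lee_fin.
move: key E1 E2 E3 (I0 _ f0) (I0 _ p1) (I0 _ p2) (I0 _ p3).
case: (\int[P]_w (f w)%:E)%E => [xf||]; case: (\int[P]_w (g1 w)%:E)%E => [x1||];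
case: (\int[P]_w (g2 w)%:E)%E => [x2||]; case: (\int[P]_w (g3 w)%:E)%E => [x3||] => //=.
rewrite -!EFinM -!EFinD !lee_fin => k e1 e2 e3 _ _ _ _.
have := ler_wpM2l b10 e1; have := ler_wpM2l b20 e2; have := ler_wpM2l b30 e3.
lra.
Qed.


Lemma mset_ge (f : T -> R) (c : R) : measurable_fun setT f ->
  measurable [set w | c <= f w].
Proof.
move=> mf; have := mf measurableT _ (measurable_itv `[c, +oo[).
rewrite setTI; congr measurable; apply/seteqP; split => x /=;
  by rewrite in_itv /= andbT.
Qed.

Lemma mset_gt (f : T -> R) (c : R) : measurable_fun setT f ->
  measurable [set w | c < f w].
Proof.
move=> mf; have := mf measurableT _ (measurable_itv `]c, +oo[).
rewrite setTI; congr measurable; apply/seteqP; split => x /=;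
  by rewrite in_itv /= andbT.
Qed.

Lemma cvg0e (u : nat -> \bar R) : (forall n, 0 <= u n)%E ->
  (u @ \oo --> 0%E <-> forall e : R, 0 < e -> \forall n \near \oo, (u n <= e%:E)%E).
Proof.
move=> u0; split.
- move=> /fine_cvgP [ufin /cvgrPdist_le cu] e e0.
  apply: filterS2 ufin (cu e e0) => n fin h.
  have {h} : `|fine (u n)| <= e by move: h; rewrite /= sub0r normrN.
  move: (u0 n) fin; case: (u n) => //= r r0 _ h.
  rewrite lee_fin; exact: le_trans (ler_norm r) h.
- move=> H; apply/fine_cvgP; split.
  + apply: filterS (H 1 ltr01) => n; move: (u0 n); by case: (u n).
  + apply/cvgrPdist_le => e e0; apply: filterS (H e e0) => n /=.
    move: (u0 n); case: (u n) => //= r; rewrite !lee_fin => r0 re.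
    by rewrite sub0r normrN ger0_norm.
Qed.

Lemma cvg0r (u : nat -> R) : (forall n, 0 <= u n) ->
  (u @ \oo --> 0 <-> forall e : R, 0 < e -> \forall n \near \oo, u n <= e).
Proof.
move=> u0; split.
- move=> /cvgrPdist_le cu e e0; apply: filterS (cu e e0) => n.
  by rewrite sub0r normrN ger0_norm.
- move=> H; apply/cvgrPdist_le => e e0; apply: filterS (H e e0) => n.
  by rewrite sub0r normrN ger0_norm.
Qed.

Lemma E0 : ('E_P[fun _ : T => (0 : R)%R] = 0)%E.
Proof. exact: (expectation_cst P 0). Qed.

Lemma L1cvg (W : nat -> T -> R) : (forall n, measurable_fun setT (W n)) ->
  (forall n x, 0 <= W n x) -> (forall n, 'E_P[W n] = 1)%E -> cvg_in_prob P W 1 ->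
  forall e : R, 0 < e ->
  \forall n \near \oo, ('E_P[fun w => (`|W n w - 1|)%R] <= e%:E)%E.
Proof.
move=> mW W0 EW cW e e0.
have d0 : 0 < e / 4 by rewrite divr_gt0.
have hP := (@cvg0e _ (fun n => measure_ge0 P _)).1 (cW _ d0) _ d0.
apply: filterS hP => n hn.
have mA : measurable [set w | e / 4 <= `|W n w - 1|].
  apply: mset_ge; apply: measurableT_comp => //.
  exact: measurable_funB (mW n) (measurable_cst _).
apply: le_trans.
  apply: (@E_le _ (W n) (\1_[set w | e / 4 <= `|W n w - 1|]) (fun _ => 0)
    1 (2 * (e / 4)) 1 2 0 1 (e / 4) 0) => //.
  - apply: measurableT_comp => //; exact: measurable_funB (mW n) (measurable_cst _).
  - by rewrite mulr_ge0 // ltW.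
  - by rewrite EW.
  - by rewrite E_indic.
  - by rewrite E0.
  - move=> x; rewrite indicE mulr0 addr0 mul1r.
    have := W0 n x.
    case: (pselect (e / 4 <= `|W n x - 1|)) => h.
      rewrite mem_set //= mulr1n => Wx.
      have : `|W n x - 1| <= W n x + 1 by rewrite ler_norml; apply/andP; split; lra.
      lra.
    rewrite memNset //= mulr0n => Wx.
    have hl : `|W n x - 1| < e / 4 by rewrite ltNge; apply/negP.
    have : `|W n x - 1| <= W n x - 1 + 2 * (e / 4).
      rewrite ler_norml; apply/andP; split; move: hl; rewrite ltr_norml => /andP[]; lra.
    lra.
rewrite lee_fin; lra.
Qed.

End helpers.

Import Order.TTheory GRing.Theory Num.Theory.
Local Open Scope ring_scope.

Unset Implicit Arguments.
Theorem lemma4p2 (d : measure_display) (T : measurableType d) (R : realType)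
  (P : probability T R) (X Y : nat -> {RV P >-> R}) (kappa : R) :
  0 < kappa ->
  (forall n w, 0 <= X n w /\ X n w <= kappa * Y n w) ->
  (forall n, (0 < 'E_P[Y n])%E /\ ('E_P[Y n] < +oo)%E) ->
  cvg_in_prob P (fun n w => Y n w / fine ('E_P[Y n])%E) 1 ->
  ( ((fun n => fine ('E_P[X n])%E / fine ('E_P[Y n])%E) @ \oo --> 0)
      <-> cvg_in_prob P (fun n w => X n w / Y n w) 0 )
  /\
  (forall tau : R, 0 < tau ->
     (forall n, (tau%:E * 'E_P[Y n] <= 'E_P[X n])%E) ->
     cvg_in_qm P (fun n w => Y n w / fine ('E_P[Y n])%E) 1 ->
     cvg_in_prob P (fun n w => X n w / fine ('E_P[X n])%E) 1 ->
     (fun n => ('V_P[X n] * ((fine ('E_P[X n])%E) ^- 2)%:E)%E) @ \oo --> 0%E).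
Proof.
move=> k0 hXY hEY cY.
have Y0 n w : 0 <= Y n w.
  have [h1 h2] := hXY n w; rewrite -(pmulr_rge0 _ k0); exact: le_trans h2.
have X0 n w : 0 <= X n w by have [] := hXY n w.
have XkY n w : X n w <= kappa * Y n w by have [] := hXY n w.
have mX n : measurable_fun setT (X n) by exact: measurable_funPT.
have mY n : measurable_fun setT (Y n) by exact: measurable_funPT.
pose a n := fine 'E_P[Y n]%E.
have EYa n : ('E_P[Y n] = (a n)%:E)%E.
  have [h1 h2] := hEY n; rewrite /a fineK // fin_numE; apply/andP; split.
    by rewrite gt_eqF // (lt_trans _ h1) // ltNye.
  by rewrite lt_eqF.
have a0 n : 0 < a n by have [h1 _] := hEY n; move: h1; rewrite EYa lte_fin.
pose b n := fine 'E_P[X n]%E.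
have EXb n : ('E_P[X n] = (b n)%:E)%E.
  have h : ('E_P[X n] <= (0 + kappa * a n + 0 * 0 + 0 * 0 - 0)%:E)%E.
    apply: (E_le (P := P) (f := X n) (g1 := Y n) (g2 := fun _ => 0) (g3 := fun _ => 0)) => //.
    - exact: ltW.
    - by rewrite EYa.
    - by rewrite E0.
    - by rewrite E0.
    - by move=> w; rewrite !mulr0 !addr0 add0r.
  have h0 := E_ge0 P (X0 n).
  move: h h0; rewrite /b; case: ('E_P[X n])%E => //.
have b0 n : 0 <= b n by have := E_ge0 P (X0 n); rewrite EXb lee_fin.
pose Yt n w := Y n w / a n.
have mYt n : measurable_fun setT (Yt n).
  exact: measurable_funM (mY n) (measurable_cst _).
have Yt0 n w : 0 <= Yt n w by rewrite /Yt divr_ge0 // ltW.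
have EYt n : ('E_P[Yt n] = 1)%E.
  rewrite /Yt E_scale // ?invr_ge0 ?(ltW (a0 n)) // EYa -EFinM mulfV //.
  exact: lt0r_neq0.
have L1Y := L1cvg (P := P) mYt Yt0 EYt cY.
pose B eps n := [set w | 0 <= X n w - eps * Y n w] `&` [set w | 0 < Y n w].
have hB eps n : 0 < eps ->
    [set w | eps <= `|X n w / Y n w - 0|] = B eps n.
  move=> e0; apply/seteqP; split => w /=.
  - rewrite subr0 ger0_norm ?divr_ge0 //.
    have := Y0 n w; rewrite le_eqVlt => /predU1P [Ye|Yp].
      rewrite -Ye invr0 mulr0 => h; lra.
    by rewrite ler_pdivlMr // => h; split => //=; rewrite subr_ge0.
  - rewrite /B => -[/= h Yp]; rewrite subr0 ger0_norm ?divr_ge0 // ler_pdivlMr //.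
    by rewrite subr_ge0 in h.
have mB eps n : measurable (B eps n).
  apply: measurableI.
  - apply: mset_ge; apply: measurable_funB => //.
    exact: measurable_funM (measurable_cst _) (mY n).
  - exact: mset_gt.
have r0 n : 0 <= b n / a n by rewrite divr_ge0 // ltW.
have mYt1 n : measurable_fun setT (fun w => `|Yt n w - 1|).
  apply: measurableT_comp => //; exact: measurable_funB (mYt n) (measurable_cst _).
have mC (t : R) n : measurable [set w | t <= `|Yt n w - 1|] by exact: mset_ge.
split; first split.
- move=> /(cvg0r r0) H eps eps0.
  rewrite (_ : (fun n => _) = fun n => P (B eps n)); last first.
    by apply/funext => n /=; rewrite hB.
  apply/(cvg0e (fun n => measure_ge0 P _)) => e e0.
  near=> n.
  have hr : b n / a n <= e * eps / 4.
    by near: n; apply: H; rewrite divr_gt0 // mulr_gt0.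
  have hC : (P [set w | (1/2 <= `|Yt n w - 1|)%R] <= (e/2)%:E)%E.
    near: n; apply: (cvg0e (fun n => measure_ge0 P _)).1 (cY (1/2) _) (e/2) _.
      by [].
    by rewrite divr_gt0.
  suff : ('E_P[\1_(B eps n)] <= e%:E)%E by rewrite E_indic.
  apply: le_trans.
    apply: (E_le (f := \1_(B eps n)) (g1 := fun w => X n w / a n)
      (g2 := \1_[set w | 1/2 <= `|Yt n w - 1|]) (g3 := fun _ => 0)
      (c := 0) (a := 0) (b1 := 2 / eps) (b2 := 1) (b3 := 0)
      (r1 := b n / a n) (r2 := e / 2) (r3 := 0)) => //.
    - exact: measurable_funM (mX n) (measurable_cst _).
    - by move=> x; rewrite divr_ge0 // ltW.
    - by rewrite divr_ge0 // ltW.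
    - by rewrite E_scale ?invr_ge0 ?(ltW (a0 n)) // EXb -EFinM.
    - by rewrite E_indic.
    - by rewrite E0.
    - move=> x; rewrite !indicE mulr0 !addr0 add0r mul1r.
      have hx : 0 <= 2/eps * (X n x / a n) by rewrite mulr_ge0 // divr_ge0 // ltW.
      case: (pselect ([set w | 1/2 <= `|Yt n w - 1|] x)) => hc.
        rewrite (mem_set hc) /= mulr1n.
        by case: (pselect (B eps n x)) => hb;
          [rewrite (mem_set hb) | rewrite (memNset hb)]; rewrite /= ?mulr1n ?mulr0n; lra.
      rewrite (memNset hc) /= mulr0n addr0.
      case: (pselect (B eps n x)) => hb; last by rewrite (memNset hb) /= mulr0n.
      rewrite (mem_set hb) /= mulr1n.
      move: hb => [/= hb _]; rewrite subr_ge0 in hb.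
      have h1 : eps * Yt n x <= X n x / a n.
        by rewrite /Yt mulrA ler_wpM2r // invr_ge0 ltW.
      have h2 : 2/eps * (eps * Yt n x) = 2 * Yt n x.
        by field; exact: lt0r_neq0.
      have h3 : 2/eps*(eps*Yt n x) <= 2/eps*(X n x / a n).
        by apply: ler_wpM2l => //; rewrite divr_ge0 // ltW.
      have h4 : 1/2 < Yt n x.
        move: hc => /negP; rewrite -ltNge ltr_norml => /andP[+ _]; lra.
      lra.
    have h5 : 2 / eps * (b n / a n) <= 2 / eps * (e * eps / 4).
      by apply: ler_wpM2l => //; rewrite divr_ge0 // ltW.
    have h6 : 2 / eps * (e * eps / 4) = e / 2.
      by field; exact: lt0r_neq0.
    rewrite lee_fin; lra.
- move=> cXY; apply/(cvg0r r0) => e e0.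
  pose eps := e / 3.
  have eps0 : 0 < eps by rewrite divr_gt0.
  have cB := cXY eps eps0.
  rewrite (_ : (fun n => _) = fun n => P (B eps n)) in cB; last first.
    by apply/funext => n /=; rewrite hB.
  move/(cvg0e (fun n => measure_ge0 P _)) : cB => cB.
  have ek : 0 < e / (3 * kappa) by rewrite divr_gt0 // mulr_gt0.
  near=> n.
  have h1 : (P (B eps n) <= (e / (3 * kappa))%:E)%E by near: n; exact: cB.
  have h2 : ('E_P[fun w => (`|Yt n w - 1|)%R] <= (e / (3 * kappa))%:E)%E.
    by near: n; exact: L1Y.
  have : ((b n / a n)%:E <= (0 + eps * 1 + kappa * (e / (3 * kappa))
     + kappa * (e / (3 * kappa)) - 0)%:E)%E.
    have <- : ('E_P[fun w => (X n w / a n)%R] = (b n / a n)%:E)%E.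
      by rewrite E_scale ?invr_ge0 ?(ltW (a0 n)) // EXb -EFinM.
    apply: (E_le (f := fun w => X n w / a n) (g1 := Yt n)
      (g2 := fun w => `|Yt n w - 1|) (g3 := \1_(B eps n))
      (c := 0) (a := 0) (b1 := eps) (b2 := kappa) (b3 := kappa)
      (r1 := 1) (r2 := e / (3 * kappa)) (r3 := e / (3 * kappa))) => //.
    - exact: measurable_funM (mX n) (measurable_cst _).
    - by move=> x; rewrite divr_ge0 // ltW.
    - exact: ltW.
    - exact: ltW.
    - exact: ltW.
    - by rewrite EYt.
    - by rewrite E_indic.
    - move=> x; rewrite indicE addr0 add0r.
      have p1 : 0 <= eps * Yt n x by rewrite mulr_ge0 // ltW.
      have p2 : 0 <= kappa * `|Yt n x - 1| by rewrite mulr_ge0 // ltW.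
      case: (pselect (B eps n x)) => hb.
        rewrite (mem_set hb) /= mulr1n mulr1.
        have q1 : X n x / a n <= kappa * Yt n x.
          by rewrite /Yt mulrA ler_wpM2r // invr_ge0 ltW.
        have q2 : Yt n x <= `|Yt n x - 1| + 1.
          have := ler_norm (Yt n x - 1); lra.
        have := ler_wpM2l (ltW k0) q2; rewrite mulrDr mulr1 => q3.
        lra.
      rewrite (memNset hb) /= mulr0n mulr0 addr0.
      have hX : X n x <= eps * Y n x.
        have := Y0 n x; rewrite le_eqVlt => /predU1P [Ye|Yp].
          by have := XkY n x; rewrite -Ye !mulr0.
        have : ~ (0 <= X n x - eps * Y n x) by move=> h; apply: hb; split.
        by move/negP; rewrite -ltNge subr_lt0 => /ltW.
      have : X n x / a n <= eps * Yt n x.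
        by rewrite /Yt mulrA ler_wpM2r // invr_ge0 ltW.
      lra.
  rewrite lee_fin => h.
  have : kappa * (e / (3 * kappa)) = e / 3 by field; exact: lt0r_neq0.
  rewrite /eps in h; lra.
move=> tau tau0 hXt cYq cZ.
have hb n : tau * a n <= b n.
  by move: (hXt n); rewrite EYa EXb -EFinM lee_fin.
have bpos n : 0 < b n by exact: lt_le_trans (mulr_gt0 tau0 (a0 n)) (hb n).
pose Z n w := X n w / b n.
have EV n : ('V_P[X n] * ((b n) ^- 2)%:E = 'E_P[fun w => ((Z n w - 1)^+2)%R])%E.
  rewrite /variance covariance.unlock.
  have -> : ((X n \- cst (fine 'E_P[X n]%E)) * (X n \- cst (fine 'E_P[X n]%E)))%R
     = (fun w => (X n w - b n) * (X n w - b n)) by apply/funext => w.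
  rewrite -E_scale.
  - congr ('E_P[_])%E; apply/funext => w; rewrite /Z.
    by field; exact: lt0r_neq0.
  - by rewrite invr_ge0 exprn_ge0 // ltW.
  - apply: measurable_funM; exact: measurable_funB (mX n) (measurable_cst _).
  - by move=> w; rewrite -expr2 sqr_ge0.
rewrite (_ : (fun n => _) = fun n => 'E_P[fun w => ((Z n w - 1)^+2)%R]%E); last first.
  by apply/funext => n; exact: EV n.
apply/(cvg0e (fun n => E_ge0 P (fun w => sqr_ge0 (Z n w - 1)))) => e e0.
have [c c0 hc] : exists2 c : R, 0 < c & c = kappa / tau.
  by exists (kappa / tau) => //; rewrite divr_gt0.
have [eta eta0 heta] : exists2 eta : R, 0 < eta & (2 * c ^+ 2 + 2) * eta * 16 = e.
  exists (e / (16 * (2 * c ^+ 2 + 2))).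
    by rewrite divr_gt0 // mulr_gt0 // addr_gt0 // mulr_gt0 // exprn_gt0.
  by field; rewrite lt0r_neq0 // addr_gt0 // mulr_gt0 // exprn_gt0.
have [del [del0 del1 dele]] : exists del : R, [/\ 0 < del, del <= 1 & del <= e / 4].
  exists (Num.min 1 (e / 4)); split.
  - by rewrite lt_min ltr01 divr_gt0.
  - by rewrite ge_min lexx.
  - by rewrite ge_min lexx orbT.
have mZ n : measurable_fun setT (Z n) by exact: measurable_funM (mX n) (measurable_cst _).
have mZ1 n : measurable_fun setT (fun w => Z n w - 1).
  exact: measurable_funB (mZ n) (measurable_cst _).
have mYt1' n : measurable_fun setT (fun w => Yt n w - 1).
  exact: measurable_funB (mYt n) (measurable_cst _).
near=> n.
have h1 : ('E_P[fun w => ((Yt n w - 1) ^+ 2)%R] <= eta%:E)%E.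
  near: n; apply: (cvg0e (fun n => E_ge0 P (fun w => sqr_ge0 (Yt n w - 1)))).1 cYq _ eta0.
have h2 : ('E_P[fun w => (`|Yt n w - 1|)%R] <= eta%:E)%E.
  by near: n; exact: L1Y.
have h3 : (P [set w | (del <= `|Z n w - 1|)%R] <= eta%:E)%E.
  near: n; exact: (cvg0e (fun n => measure_ge0 P _)).1 (cZ del del0) _ eta0.
apply: le_trans.
  apply: (E_le (f := fun w => (Z n w - 1) ^+ 2) (g1 := fun w => (Yt n w - 1) ^+ 2)
      (g2 := fun w => `|Yt n w - 1|) (g3 := \1_[set w | del <= `|Z n w - 1|])
      (c := 0) (a := del ^+ 2) (b1 := 2 * c ^+ 2) (b2 := 4 * c ^+ 2)
      (b3 := 2 * c ^+ 2 + 2) (r1 := eta) (r2 := eta) (r3 := eta)) => //.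
  - exact: measurable_funX.
  - exact: measurable_funX.
  - apply: measurable_indic; apply: mset_ge.
    by apply: measurableT_comp => //; exact: mZ1.
  - by move=> x; exact: sqr_ge0.
  - by move=> x; exact: sqr_ge0.
  - exact: sqr_ge0.
  - by rewrite mulr_ge0 // exprn_ge0 // ltW.
  - by rewrite mulr_ge0 // exprn_ge0 // ltW.
  - by rewrite addr_ge0 // mulr_ge0 // exprn_ge0 // ltW.
  - rewrite E_indic //; apply: mset_ge.
    by apply: measurableT_comp => //; exact: mZ1.
  - move=> x; rewrite indicE addr0.
    have Z0 : 0 <= Z n x by rewrite divr_ge0.
    have q : Z n x <= c * Yt n x.
      have s1 : X n x / b n <= kappa * Y n x / b n.
        by rewrite ler_wpM2r // invr_ge0.
      have s2 : kappa * Y n x / b n <= kappa * Y n x / (tau * a n).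
        apply: ler_wpM2l; first by rewrite mulr_ge0 // ltW.
        by rewrite lef_pV2 ?posrE ?mulr_gt0.
      have s3 : kappa * Y n x / (tau * a n) = c * Yt n x.
        rewrite hc /Yt; field.
        by rewrite lt0r_neq0 ?a0 // lt0r_neq0.
      rewrite /Z; lra.
    have p1 : 0 <= 2 * c ^+ 2 * (Yt n x - 1) ^+ 2.
      by rewrite mulr_ge0 ?sqr_ge0 // mulr_ge0 // exprn_ge0 // ltW.
    have p2 : 0 <= 4 * c ^+ 2 * `|Yt n x - 1|.
      by rewrite mulr_ge0 // mulr_ge0 // exprn_ge0 // ltW.
    case: (pselect ([set w | del <= `|Z n w - 1|] x)) => hA; last first.
      rewrite (memNset hA) /= mulr0n mulr0 addr0.
      have : `|Z n x - 1| < del by rewrite ltNge; apply/negP.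
      rewrite ltr_norml => /andP[u1 u2].
      nra.
    rewrite (mem_set hA) /= mulr1n mulr1.
    have F1 : (Z n x - 1) ^+ 2 <= 2 * Z n x ^+ 2 + 2 by nra.
    have F2 : Z n x ^+ 2 <= c ^+ 2 * Yt n x ^+ 2.
      nra.
    have F3 : Yt n x ^+ 2 <= (Yt n x - 1) ^+ 2 + 2 * `|Yt n x - 1| + 1.
      have := ler_norm (Yt n x - 1); nra.
    have F4 := ler_wpM2l (exprn_ge0 2 (ltW c0)) F3.
    have : 0 <= del ^+ 2 by exact: sqr_ge0.
    lra.
rewrite lee_fin.
have : del ^+ 2 <= del by nra.
have : 0 <= c ^+ 2 * eta by rewrite mulr_ge0 ?sqr_ge0 // ltW.
lra.
Unshelve. all: by end_near.
Qed.
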